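(* Let $n=2k+1$ be odd and let $A$ be an $n\times n$ semi-ASM. Then there exist pairwise disjoint $n\times n$ permutation matrices $P_1,\ldots,P_n$ with $P_1+\cdots+P_n=J_n$ such that every position where $A$ has entry $-1$ is a position of a $1$ in some $P_i$ with $i\le k$, and every position where $A$ has entry $1$ is a position of a $1$ in some $P_i$ with $k<i\le n$.
   Context: A semi-ASM of order $n$ is an $n\times n$ matrix with entries in $\{0,1,-1\}$ all of whose row sums and column sums equal $1$. $J_n$ is the $n\times n$ all-ones matrix. Two $(0,1)$-matrices are disjoint if their sum is again a $(0,1)$-matrix. *)

(* Defs.v *)
From HB Require Import structures.
From mathcomp Require Import all_boot all_order all_algebra all_fingroup.
Set Implicit Arguments. Unset Strict Implicit. Unset Printing Implicit Defensive.
Import Order.TTheory GRing.Theory Num.Theory.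
Local Open Scope ring_scope.

Definition semiASM (n : nat) (A : 'M[int]_n) : Prop :=
  (forall i j, A i j = 0 \/ A i j = 1 \/ A i j = -1) /\
  (forall i, \sum_(j < n) A i j = 1) /\
  (forall j, \sum_(i < n) A i j = 1).

Definition is01mx (n : nat) (A : 'M[int]_n) : Prop :=
  forall i j, A i j = 0 \/ A i j = 1.

Definition disjoint01 (n : nat) (A B : 'M[int]_n) : Prop := is01mx (A + B).

Definition Jmx (n : nat) : 'M[int]_n := const_mx 1.

(* Main.v *)
Require Import Defs.
From HB Require Import structures.
From mathcomp Require Import all_boot all_order all_algebra all_fingroup.
From mathcomp Require Import zify.
Set Implicit Arguments. Unset Strict Implicit. Unset Printing Implicit Defensive.

Section HallS.
Variables (T1 T2 : finType) (y0 : T2).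

Definition nbr (R : T1 -> T2 -> bool) (A : {set T1}) : {set T2} :=
  [set y | [exists x in A, R x y]].

Lemma hall_ind m : forall (R : T1 -> T2 -> bool) (S : {set T1}), #|S| <= m ->
  (forall A : {set T1}, A \subset S -> #|A| <= #|nbr R A|) ->
  exists f : T1 -> T2, {in S &, injective f} /\ {in S, forall x, R x (f x)}.
Proof.
elim: m => [|m IH] R S hS hH.
  exists (fun _ => y0); move: hS; rewrite leqn0 cards_eq0 => /eqP ->.
  by split=> [x y|x]; rewrite inE.
case: (boolP [exists A : {set T1}, [&& A \proper S, A != set0 & #|nbr R A| <= #|A|]]).
- case/existsP => A /and3P [pAS nA0 hA].
  have sAS := proper_sub pAS.
  have cA : #|A| <= m by have := proper_card pAS; lia.
  have [f1 [inj1 R1]] := IH R A cA (fun B sB => hH B (subset_trans sB sAS)).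
  pose R' := fun x y => R x y && (y \notin nbr R A).
  have cS' : #|S :\: A| <= m.
    rewrite cardsD (setIidPr sAS).
    have : 0 < #|A| by rewrite card_gt0.
    lia.
  have hH' : forall B : {set T1}, B \subset S :\: A -> #|B| <= #|nbr R' B|.
    move=> B sB.
    have e : nbr R' B = nbr R B :\: nbr R A.
      apply/setP => y; rewrite in_setD [y \in nbr R' B]inE [y \in nbr R B]inE /R'.
      case: (boolP (y \in nbr R A)) => hy /=.
        by apply/negbTE/existsP => -[x /and3P []].
      by apply/idP/idP => /existsP [x hx]; apply/existsP; exists x; move: hx; rewrite andbT.
    have eU : nbr R (B :|: A) = nbr R B :|: nbr R A.
      apply/setP => y; rewrite !inE; apply/existsP/orP.
        by case=> x /andP []; rewrite inE => /orP [] xI Rxy; [left|right];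
           apply/existsP; exists x; rewrite xI.
      by case=> /existsP [x /andP [xI Rxy]]; exists x; rewrite inE xI ?orbT.
    have sBS : B \subset S by apply: subset_trans sB (subsetDl _ _).
    have hU : B :|: A \subset S by rewrite subUset sBS sAS.
    have := hH _ hU.
    have dBA : B :&: A = set0.
      apply/setP => x; rewrite !inE; apply/negbTE; apply/negP => /andP [xB xA].
      by move/subsetP: sB => /(_ x xB); rewrite inE xA.
    rewrite eU e cardsU dBA cards0 cardsU cardsD.
    have := subset_leq_card (subsetIl (nbr R B) (nbr R A)).
    lia.
  have [f2 [inj2 R2]] := IH R' (S :\: A) cS' hH'.
  exists (fun x => if x \in A then f1 x else f2 x); split.
    move=> x y xS yS /=.
    case: (boolP (x \in A)) => xA; case: (boolP (y \in A)) => yA.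
    + exact: inj1.
    + move=> e; have := R2 y; rewrite inE yA yS => /(_ isT) /andP [_].
      by rewrite -e inE; case/existsP; exists x; rewrite xA R1.
    + move=> e; have := R2 x; rewrite inE xA xS => /(_ isT) /andP [_].
      by rewrite e inE; case/existsP; exists y; rewrite yA R1.
    + by apply: inj2; rewrite inE ?xA ?yA.
  move=> x xS /=; case: (boolP (x \in A)) => xA; first exact: R1.
  by have := R2 x; rewrite inE xA xS => /(_ isT) /andP [].
- move/existsPn => hnt.
  case: (set_0Vmem S) => [->|[x xS]].
    exists (fun _ => y0); by split=> [u v|u]; rewrite inE.
  have := hH [set x]; rewrite sub1set xS cards1 => /(_ isT).
  case/card_gt0P => y; rewrite inE => /existsP [x' /andP [/set1P -> Rxy]].
  pose R' := fun a b => R a b && (b != y).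
  have cS' : #|S :\ x| <= m by move: hS; rewrite (cardsD1 x S) xS; lia.
  have hH' : forall B : {set T1}, B \subset S :\ x -> #|B| <= #|nbr R' B|.
    move=> B sB.
    case: (eqVneq B set0) => [->|nB0]; first by rewrite cards0.
    have sBS : B \subset S by apply: subset_trans sB (subsetDl _ _).
    have pBS : B \proper S.
      rewrite properE sBS /=; apply/negP => /subsetP /(_ x xS) xB.
      by move/subsetP: sB => /(_ x xB); rewrite !inE eqxx.
    have := hnt B; rewrite pBS nB0 /= -ltnNge => lt.
    have e : nbr R' B = nbr R B :\ y.
      apply/setP => z; rewrite !inE /R'.
      case: (eqVneq z y) => [->|] /=.
        by apply/negbTE/existsP => -[u /and3P []].
      by move=> _; apply/idP/idP => /existsP [u hu]; apply/existsP; exists u; move: hu; rewrite andbT.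
    rewrite e; have := cardsD1 y (nbr R B); lia.
  have [f2 [inj2 R2]] := IH R' (S :\ x) cS' hH'.
  exists (fun z => if z == x then y else f2 z); split.
    move=> u v uS vS /=.
    case: (eqVneq u x) => [->|ux]; case: (eqVneq v x) => [->|vx] //.
    + move=> e; have := R2 v; rewrite !inE vx vS => /(_ isT) /andP [_].
      by rewrite -e eqxx.
    + move=> e; have := R2 u; rewrite !inE ux uS => /(_ isT) /andP [_].
      by rewrite e eqxx.
    + by apply: inj2; rewrite !inE ?ux ?vx.
  move=> z zS /=; case: (eqVneq z x) => [->//|zx].
  by have := R2 z; rewrite !inE zx zS => /(_ isT) /andP [].
Qed.

End HallS.

Lemma sumb_card (T : finType) (P : pred T) : \sum_x (P x : nat) = #|P|.
Proof.
rewrite -sum1_card [RHS]big_mkcond; apply: eq_bigr => x _; rewrite unfold_in; by case: (P x).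
Qed.

Section Decomp.
Variable T : finType.

Lemma regular_perm d (G : T -> T -> bool) : 0 < d ->
  (forall r, #|[pred c | G r c]| = d) -> (forall c, #|[pred r | G r c]| = d) ->
  exists s : {perm T}, forall r, G r (s r).
Proof.
move=> d0 hr hc.
case: (set_0Vmem [set: T]) => [e|[y0 _]].
  by exists 1%g => r; have := in_setT r; rewrite e inE.
have hall : forall A : {set T}, A \subset [set: T] -> #|A| <= #|nbr G A|.
  move=> A _.
  have e : \sum_(x in A) \sum_(y in nbr G A) (G x y : nat) =
           \sum_(y in nbr G A) \sum_(x in A) (G x y : nat) by exact: exchange_big.
  have eL : \sum_(x in A) \sum_(y in nbr G A) (G x y : nat) = #|A| * d.
    rewrite -sum1_card big_distrl /=; apply: eq_bigr => x xA.
    rewrite mul1n -(hr x) -sumb_card [RHS](bigID (fun y => y \in nbr G A)) /=.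
    rewrite [X in _ = _ + X]big1 ?addn0 // => y yN.
    case: (boolP (G x y)) => // Gxy; case/negP: yN; rewrite inE.
    by apply/existsP; exists x; rewrite xA.
  have eR : \sum_(y in nbr G A) \sum_(x in A) (G x y : nat) <= #|nbr G A| * d.
    rewrite -sum1_card big_distrl /=; apply: leq_sum => y _.
    rewrite mul1n -(hc y) -sumb_card [X in _ <= X](bigID (fun x => x \in A)) /=.
    exact: leq_addr.
  by rewrite -(leq_pmul2r d0) -eL e.
have [f [finj fG]] := hall_ind y0 (leqnn _) hall.
have inj : injective f by move=> x y; apply: finj; rewrite inE.
by exists (perm inj) => r; rewrite permE; apply: fG; rewrite inE.
Qed.

Lemma decomp d : forall (G : T -> T -> bool),
  (forall r, #|[pred c | G r c]| = d) -> (forall c, #|[pred r | G r c]| = d) ->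
  exists s : 'I_d -> {perm T},
    (forall i r, G r (s i r)) /\ (forall i j r, s i r = s j r -> i = j) /\
    (forall r c, G r c -> exists i, s i r = c).
Proof.
elim: d => [|d IH] G hr hc.
  exists (fun _ => 1%g); split; first by case.
  split; first by case.
  by move=> r c Grc; have := hr r; move/card0_eq => /(_ c); rewrite inE Grc.
have [sg hsg] := regular_perm (ltn0Sn d) hr hc.
pose G' := fun r c => G r c && (c != sg r).
have hr' : forall r, #|[pred c | G' r c]| = d.
  move=> r; have := hr r; rewrite (cardD1 (sg r)) inE hsg add1n => -[<-].
  apply: eq_card => c; rewrite !inE /G' andbC //.
have hc' : forall c, #|[pred r | G' r c]| = d.
  move=> c; have := hc c; rewrite (cardD1 ((sg^-1)%g c)) inE.
  have := hsg ((sg^-1)%g c); rewrite permKV => -> ; rewrite add1n => -[<-].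
  apply: eq_card => r; rewrite !inE /G' andbC; congr (_ && _).
  apply/idP/idP; apply: contra => /eqP e; apply/eqP.
    by rewrite e permKV.
  by rewrite e permK.
have [s' [h1 [h2 h3]]] := IH G' hr' hc'.
exists (fun i => if unlift ord_max i is Some j then s' j else sg); split.
  move=> i r; case: (unliftP ord_max i) => [j _|_] //.
  by have /andP [] := h1 j r.
split.
  move=> i j r.
  case: (unliftP ord_max i) => [i' ->|->]; case: (unliftP ord_max j) => [j' ->|->] //.
  - by move/h2 => ->.
  - by move=> e; have /andP [_] := h1 i' r; rewrite e eqxx.
  - by move=> e; have /andP [_] := h1 j' r; rewrite e eqxx.
move=> r c Grc; case: (eqVneq c (sg r)) => [->|ne].
  by exists ord_max; rewrite unlift_none.
have [i hi] : exists i, s' i r = c by apply: h3; rewrite /G' Grc ne.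
by exists (lift ord_max i); rewrite liftK.
Qed.

End Decomp.

Section Euler.
Variable V : eqType.
Definition src (q : (V * V) * bool) := if q.2 then q.1.1 else q.1.2.
Definition dst (q : (V * V) * bool) := if q.2 then q.1.2 else q.1.1.
Definition degv (v : V) (s : seq (V * V)) :=
  (count (fun e => e.1 == v) s + count (fun e => e.2 == v) s)%N.

Lemma split_sd (u v a b x : V) (b0 : bool) : (a == v) || (b == v) ->
  let w := if a == v then b else a in
  let be := if b0 then a == v else b == v in
  ((src ((u,v),b0) == x) + (src ((a,b),be) == x) = (src ((u,w),b0) == x) + (v == x))%N /\
  ((dst ((u,v),b0) == x) + (dst ((a,b),be) == x) = (dst ((u,w),b0) == x) + (v == x))%N.
Proof.
case: (eqVneq a v) => [->|av]; case: (eqVneq b v) => [->|bv] //= _;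
  case: b0; rewrite /src /dst /= ?eqxx ?(negbTE av) ?(negbTE bv) /=; lia.
Qed.

Lemma odd_helper (b : bool) m n : odd (b + m + (b + n)) = odd (m + n).
Proof. by case: b; rewrite //= !addSn addnS /= negbK. Qed.

Lemma count_zip2 (p : pred ((V*V)*bool)) a t1 e t2 b0 bs1 be bs2 :
  size t1 = size bs1 ->
  count p (zip (a :: t1 ++ e :: t2) (b0 :: bs1 ++ be :: bs2)) =
  (p (a, b0) + count p (zip t1 bs1) + (p (e, be) + count p (zip t2 bs2)))%N.
Proof. by move=> h; rewrite /= zip_cat // count_cat /= addnA. Qed.

Lemma count_zip1 (p : pred ((V*V)*bool)) a t1 t2 b0 bs1 bs2 :
  size t1 = size bs1 ->
  count p (zip (a :: t1 ++ t2) (b0 :: bs1 ++ bs2)) =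
  (p (a, b0) + count p (zip t1 bs1) + count p (zip t2 bs2))%N.
Proof. by move=> h; rewrite /= zip_cat // count_cat /= addnA. Qed.

Lemma euler m : forall s : seq (V * V), size s <= m -> (forall v, ~~ odd (degv v s)) ->
  exists bs : seq bool, size bs = size s /\
    forall v, count (fun q => src q == v) (zip s bs) = count (fun q => dst q == v) (zip s bs).
Proof.
elim: m => [|m IH] s.
  by rewrite leqn0 => /nilP -> _; exists [::].
case: s => [|[u v] t] hS hev; first by exists [::].
move: hev; case: (eqVneq u v) => [<-|uv] hev.
  have hev' : forall x, ~~ odd (degv x t).
    by move=> x; have := hev x; rewrite /degv /= odd_helper.
  have [bs [hs hb]] := IH t hS hev'.
  exists (true :: bs); split; first by rewrite /= hs.
  by move=> x; rewrite /= /src /dst /= hb.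
have : odd (degv v t).
  by have := hev v; rewrite /degv /= eqxx (negbTE uv) /= add1n addnS /= negbK.
move=> odt.
have : has (fun e : V * V => (e.1 == v) || (e.2 == v)) t.
  apply/negPn/negP => hn; move: odt; rewrite /degv.
  have -> : count (fun e : V * V => e.1 == v) t = 0%N.
    apply/eqP; rewrite eqn0Ngt -has_count; apply/negP => /hasP [e et he].
    by apply: (negP hn); apply/hasP; exists e; rewrite // he.
  have -> : count (fun e : V * V => e.2 == v) t = 0%N.
    apply/eqP; rewrite eqn0Ngt -has_count; apply/negP => /hasP [e et he].
    by apply: (negP hn); apply/hasP; exists e; rewrite // he orbT.
  by [].
case/hasP => e et pe.
move: hS hev; case/splitPr: et => t1 t2 hS hev.
move: hS hev; case: e pe => a b /= pe hS hev.
set w := if a == v then b else a.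
have hS' : size ((u, w) :: t1 ++ t2) <= m.
  by move: hS; rewrite /= !size_cat /=; lia.
have hev' : forall x, ~~ odd (degv x ((u, w) :: t1 ++ t2)).
  move=> x; have := hev x.
  have -> : degv x ((u, v) :: t1 ++ (a, b) :: t2) = (degv x ((u, w) :: t1 ++ t2) + 2 * (v == x))%N.
    rewrite /degv /= !count_cat /= /w.
    case: (eqVneq a v) pe => [->|av] /=; first by lia.
    by move/eqP => ->; lia.
  by rewrite oddD oddM /= addbF.
have [bs' [hs hb]] := IH _ hS' hev'.
case: bs' hs hb => [//|b0 bs''] [hs] hb.
rewrite size_cat in hs.
pose bs1 := take (size t1) bs''; pose bs2 := drop (size t1) bs''.
have h1 : size t1 = size bs1 by rewrite /bs1 size_take hs; case: ifP => // /negbT; rewrite -leqNgt => hh; apply/eqP; rewrite eqn_leq leq_addr hh.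
have ebs : bs'' = bs1 ++ bs2 by rewrite cat_take_drop.
exists (b0 :: bs1 ++ (if b0 then a == v else b == v) :: bs2); split.
  by rewrite /= !size_cat /= size_drop hs -h1 addKn.
move=> x; have := hb x; rewrite ebs !count_zip2 // !count_zip1 //.
have [e1 e2] := split_sd u x b0 pe.
rewrite /= in e1 e2 |- *; move: e1 e2; rewrite -/w; lia.
Qed.

End Euler.

Lemma count_enum (T : finType) (Q P : pred T) : count P (enum Q) = #|[pred x | Q x && P x]|.
Proof. by rewrite cardE /enum_mem size_filter count_filter; apply: eq_count => x; rewrite !inE andbC. Qed.

Lemma count_split (T : Type) (a q : pred T) (s : seq T) :
  (count (fun p => a p && q p) s + count (fun p => ~~ a p && q p) s = count q s)%N.
Proof. by elim: s => //= x s <-; case: (a x); case: (q x) => /=; lia. Qed.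

Lemma zip_map_index (T U : eqType) (f : T -> U) (L : seq T) (bs : seq bool) :
  uniq L -> size bs = size L ->
  zip (map f L) bs = map (fun p => (f p, nth false bs (index p L))) L.
Proof.
elim: L bs => [|x L IH] [|b0 bs] //= /andP [xL uL] [hs].
rewrite eqxx /=; congr (_ :: _); rewrite IH //.
apply/eq_in_map => p pL /=.
by have -> : (x == p) = false by apply/negbTE; apply: contraNneq xL => ->.
Qed.

Lemma card_row (T1 T2 : finType) (P : T1 -> T2 -> bool) r :
  #|[pred p : T1 * T2 | P p.1 p.2 && (p.1 == r)]| = #|[pred c | P r c]|.
Proof.
rewrite -!sumb_card -(pair_big xpredT xpredT (fun a c => (P a c && (a == r)) : nat)) /=.
rewrite (bigD1 r) //= [X in (_ + X)%N]big1 ?addn0.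
  by apply: eq_bigr => c _; rewrite eqxx andbT.
by move=> a ar; apply: big1 => c _; rewrite (negbTE ar) andbF.
Qed.

Lemma card_col (T1 T2 : finType) (P : T1 -> T2 -> bool) c :
  #|[pred p : T1 * T2 | P p.1 p.2 && (p.2 == c)]| = #|[pred r | P r c]|.
Proof.
rewrite -!sumb_card -(pair_big xpredT xpredT (fun a d => (P a d && (d == c)) : nat)) /=.
rewrite exchange_big (bigD1 c) //= [X in (_ + X)%N]big1 ?addn0.
  by apply: eq_bigr => a _; rewrite eqxx andbT.
by move=> d dc; apply: big1 => a _; rewrite (negbTE dc) andbF.
Qed.

Lemma halve (n : nat) (Z : 'I_n -> 'I_n -> bool) :
  (forall r, ~~ odd #|[pred c | Z r c]|) -> (forall c, ~~ odd #|[pred r | Z r c]|) ->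
  exists F : 'I_n -> 'I_n -> bool, (forall r c, F r c -> Z r c) /\
   (forall r, (#|[pred c | F r c]|).*2 = #|[pred c | Z r c]|) /\
   (forall c, (#|[pred r | F r c]|).*2 = #|[pred r | Z r c]|).
Proof.
move=> hr hc.
pose V := ('I_n + 'I_n)%type.
pose L := enum [pred p : 'I_n * 'I_n | Z p.1 p.2].
pose emb := fun p : 'I_n * 'I_n => ((inl p.1 : V), (inr p.2 : V)).
pose s := map emb L.
have crow : forall r, count (fun p : 'I_n * 'I_n => p.1 == r) L = #|[pred c | Z r c]|.
  by move=> r; rewrite count_enum -(card_row Z r).
have ccol : forall c, count (fun p : 'I_n * 'I_n => p.2 == c) L = #|[pred r | Z r c]|.
  by move=> c; rewrite count_enum -(card_col Z c).
have hev : forall v, ~~ odd (degv v s).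
  case=> [r|c]; rewrite /degv /s !count_map.
    have -> : count (preim emb (fun e : V * V => e.2 == inl r)) L = 0%N.
      by apply/eqP; rewrite -leqn0 leqNgt -has_count; apply/hasP => -[p].
    by rewrite addn0 (eq_count (a2 := fun p : 'I_n * 'I_n => p.1 == r)) // crow.
  have -> : count (preim emb (fun e : V * V => e.1 == inr c)) L = 0%N.
    by apply/eqP; rewrite -leqn0 leqNgt -has_count; apply/hasP => -[p].
  by rewrite add0n (eq_count (a2 := fun p : 'I_n * 'I_n => p.2 == c)) // ccol.
have [bs [hs hb]] := euler (leqnn _) hev.
pose b := fun p => nth false bs (index p L).
have ez : zip s bs = map (fun p => (emb p, b p)) L.
  by apply: zip_map_index; rewrite ?enum_uniq // hs size_map.
exists (fun r c => Z r c && b (r, c)); split; first by move=> r c /andP [].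
split.
  move=> r; have := hb (inl r); rewrite ez !count_map.
  have -> : count (preim (fun p => (emb p, b p)) (fun q => src q == inl r)) L =
            count (fun p => b p && (p.1 == r)) L.
    by apply: eq_count => -[a c]; rewrite /= /src /=; case: (b (a, c)).
  have -> : count (preim (fun p => (emb p, b p)) (fun q => dst q == inl r)) L =
            count (fun p => ~~ b p && (p.1 == r)) L.
    by apply: eq_count => -[a c]; rewrite /= /dst /=; case: (b (a, c)).
  move=> e; rewrite -(crow r) -(count_split b) -e -addnn.
  rewrite count_enum -(card_row (fun a c => Z a c && b (a, c)) r).
  by congr (_ + _)%N; apply: eq_card => -[a c]; rewrite !inE /= andbA.
move=> c; have := hb (inr c); rewrite ez !count_map.
have -> : count (preim (fun p => (emb p, b p)) (fun q => src q == inr c)) L =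
          count (fun p => ~~ b p && (p.2 == c)) L.
  by apply: eq_count => -[a d]; rewrite /= /src /=; case: (b (a, d)).
have -> : count (preim (fun p => (emb p, b p)) (fun q => dst q == inr c)) L =
          count (fun p => b p && (p.2 == c)) L.
  by apply: eq_count => -[a d]; rewrite /= /dst /=; case: (b (a, d)).
move=> e; rewrite -(ccol c) -(count_split b) e -addnn.
rewrite count_enum -(card_col (fun a d => Z a d && b (a, d)) c).
by congr (_ + _)%N; apply: eq_card => -[a d]; rewrite !inE /= andbA.
Qed.

Lemma card_or (T : finType) (a b : pred T) : (forall x, ~~ (a x && b x)) ->
  #|[pred x | a x || b x]| = (#|[pred x | a x]| + #|[pred x | b x]|)%N.
Proof.
move=> h; rewrite -!sumb_card -big_split /=; apply: eq_bigr => x _.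
by have := h x; case: (a x); case: (b x).
Qed.

Lemma sum1_ord n : (\sum_(j < n) 1 = n)%N.
Proof. by rewrite sum1_card card_ord. Qed.

Import Order.TTheory GRing.Theory Num.Theory.
Local Open Scope ring_scope.

Lemma line_count (n k : nat) (hn : n = (2 * k + 1)%N) (a : 'I_n -> int) :
  (forall j, a j = 0 \/ a j = 1 \/ a j = -1) -> \sum_(j < n) a j = 1 ->
  ~~ odd #|[pred j | a j == 0]| /\ addn #|[pred j | a j == -1]| (#|[pred j | a j == 0]|)./2 = k.
Proof.
move=> h01 hs.
set N := #|[pred j | a j == -1]|; set P := #|[pred j | a j == 1]|; set Z := #|[pred j | a j == 0]|.
have e1 : P%:Z - N%:Z = 1.
  rewrite -hs /P /N -!sumb_card -[Posz (\sum_x _)]natz -[Posz (\sum_x _)]natz !natr_sum -sumrB.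
  apply: eq_bigr => j _; rewrite /=; case: (h01 j) => [->|[->|->]] //.
have e2 : (Z + P + N = n)%N.
  rewrite /Z /P /N -!sumb_card -!big_split /= -[RHS]sum1_ord.
  by apply: eq_bigr => j _; case: (h01 j) => [->|[->|->]].
have eZ : Z = ((k - N) + (k - N))%N by lia.
by rewrite eZ addnn odd_double doubleK; split => //; lia.
Qed.

Unset Implicit Arguments.

Theorem mainTheorem16 (n k : nat) (hn : n = (2 * k + 1)%N)
  (A : 'M[int]_n) (hA : semiASM A) :
  exists P : 'I_n -> 'M[int]_n,
    (forall i, is_perm_mx (P i)) /\
    (forall i j, i != j -> disjoint01 (P i) (P j)) /\
    \sum_(i < n) P i = Jmx n /\
    (forall r c, A r c = -1 -> exists i : 'I_n, (i < k)%N /\ P i r c = 1) /\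
    (forall r c, A r c = 1 -> exists i : 'I_n, (k <= i)%N /\ P i r c = 1).
Proof.
case: hA => [h01 [hrow hcol]].
have lr : forall r, ~~ odd #|[pred c | A r c == 0]| /\
   addn #|[pred c | A r c == -1]| (#|[pred c | A r c == 0]|)./2 = k.
  by move=> r; apply: (line_count hn) => // j; apply: h01.
have lc : forall c, ~~ odd #|[pred r | A r c == 0]| /\
   addn #|[pred r | A r c == -1]| (#|[pred r | A r c == 0]|)./2 = k.
  by move=> c; apply: (line_count hn (a := fun r => A r c)) => // j; apply: h01.
have [F [FZ [Fr Fc]]] := @halve _ (fun r c => A r c == 0)
   (fun r => proj1 (lr r)) (fun c => proj1 (lc c)).
pose H := fun r c => (A r c == -1) || F r c.
have dH : forall r c, ~~ ((A r c == -1) && F r c).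
  by move=> r c; apply/negP => /andP [/eqP e /FZ]; rewrite e.
have Hr : forall r, #|[pred c | H r c]| = k.
  move=> r; rewrite card_or // -(proj2 (lr r)) -Fr doubleK //.
have Hc : forall c, #|[pred r | H r c]| = k.
  move=> c; rewrite card_or // -(proj2 (lc c)) -Fc doubleK //.
pose C := fun r c => ~~ H r c.
have Cr : forall r, #|[pred c | C r c]| = k.+1.
  move=> r; have := cardC [pred c | H r c]; rewrite Hr card_ord => e.
  have -> : #|[pred c | C r c]| = #|[predC [pred c | H r c]]| by apply: eq_card.
  move: e; move: (#|[predC [pred c | H r c]]|) => m e; lia.
have Cc : forall c, #|[pred r | C r c]| = k.+1.
  move=> c; have := cardC [pred r | H r c]; rewrite Hc card_ord => e.
  have -> : #|[pred r | C r c]| = #|[predC [pred r | H r c]]| by apply: eq_card.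
  move: e; move: (#|[predC [pred r | H r c]]|) => m e; lia.
have [s1 [s1H [s1i s1c]]] := decomp Hr Hc.
have [s2 [s2C [s2i s2c]]] := decomp Cr Cc.
have en : n = (k + k.+1)%N by rewrite hn; lia.
pose sg := fun i : 'I_n => match split (cast_ord en i) with inl j => s1 j | inr j => s2 j end.
have sginj : forall i j r, sg i r = sg j r -> i = j.
  move=> i j r; rewrite /sg.
  case: splitP => i' ei; case: splitP => j' ej.
  - by move/s1i => e; apply/val_inj; rewrite e in ei; exact: (etrans ei (esym ej)).
  - by move=> e; have := s1H i' r; rewrite e; have := s2C j' r; rewrite /C => /negbTE ->.
  - by move=> e; have := s1H j' r; rewrite -e; have := s2C i' r; rewrite /C => /negbTE ->.
  - by move/s2i => e; apply/val_inj; rewrite e in ei; exact: (etrans ei (esym ej)).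
have sgl : forall j : 'I_k, sg (cast_ord (esym en) (lshift _ j)) = s1 j.
  by move=> j; rewrite /sg cast_ordKV -[lshift _ j]/(unsplit (inl j)) unsplitK.
have sgr : forall j : 'I_k.+1, sg (cast_ord (esym en) (rshift k j)) = s2 j.
  by move=> j; rewrite /sg cast_ordKV -[rshift _ j]/(unsplit (inr j)) unsplitK.
have sgc : forall r c, exists i, sg i r = c.
  move=> r c; case: (boolP (H r c)) => hrc.
    by have [j <-] := s1c r c hrc; exists (cast_ord (esym en) (lshift _ j)); rewrite sgl.
  by have [j <-] := s2c r c hrc; exists (cast_ord (esym en) (rshift k j)); rewrite sgr.
have PE : forall i r c, (perm_mx (sg i) : 'M[int]_n) r c = (sg i r == c)%:R.
  by move=> i r c; rewrite perm_mxEsub !mxE.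
exists (fun i => perm_mx (sg i)); split.
  by move=> i; apply/is_perm_mxP; exists (sg i).
split.
  move=> i j ij r c; rewrite mxE !PE.
  case: (eqVneq (sg i r) c) => [ei|]; case: (eqVneq (sg j r) c) => [ej|] /=; auto.
  by move: ij; rewrite (sginj i j r) ?eqxx // ei ej.
split.
  apply/matrixP => r c; rewrite summxE !mxE.
  have [i0 hi0] := sgc r c.
  rewrite (bigD1 i0) //= big1 ?addr0 ?PE ?hi0 ?eqxx //.
  move=> i ii0; rewrite PE; case: (eqVneq (sg i r) c) => // e.
  by move: ii0; rewrite (sginj i i0 r) ?eqxx // e hi0.
split.
  move=> r c e.
  have hrc : H r c by rewrite /H e eqxx.
  have [j hj] := s1c r c hrc.
  exists (cast_ord (esym en) (lshift _ j)); split; first by rewrite /= ltn_ord.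
  by rewrite PE sgl hj eqxx.
move=> r c e.
have hrc : C r c.
  rewrite /C /H e /=; apply/negP => /FZ; by rewrite e.
have [j hj] := s2c r c hrc.
exists (cast_ord (esym en) (rshift k j)); split; first by rewrite /= leq_addr.
by rewrite PE sgr hj eqxx.
Qed.
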